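(* Let $T$ be a horizon with $T>25\log T$. Consider the two-armed instance in which arm 1 is Bernoulli with mean $\mu_1=(2e)^{-T}$ and arm 2 is Bernoulli with mean $\mu_2=1$. Then the UCB algorithm run for $T$ rounds on this instance has Nash regret $$\textsc{NR}_T\ge 1-\frac1T.$$
   Context: Nash regret: $\textsc{NR}_T:=\mu^*-\big(\prod_{t=1}^T\mathbb{E}[\mu_{I_t}]\big)^{1/T}$, where $I_t$ is the arm pulled in round $t$ and $\mu^*=\max_i\mu_i$. $\log$ is the natural logarithm. UCB algorithm: in each round $t$ it pulls an arm maximizing $\mathrm{UCB}_{i,t}:=\widehat\mu_i+\sqrt{\frac{2\log T}{n_{i,t}}}$, where $n_{i,t}$ is the number of times arm $i$ was pulled before round $t$ and $\widehat\mu_i$ its empirical mean (an arm not yet pulled has index $+\infty$); ties are broken by an arbitrary but fixed deterministic rule. *)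

(* Defs.v *)
From HB Require Import structures.
From mathcomp Require Import all_boot all_order all_algebra.
From mathcomp Require Import all_classical all_reals all_analysis.
Set Implicit Arguments. Unset Strict Implicit. Unset Printing Implicit Defensive.
Import Order.TTheory GRing.Theory Num.Theory.
Local Open Scope ring_scope.

(* A history is the sequence of (arm pulled, reward observed) pairs. *)
Definition npulls (K : nat) (h : seq ('I_K * bool)) (i : 'I_K) : nat :=
  count (fun p => p.1 == i) h.

Definition rsum (R : realType) (K : nat) (h : seq ('I_K * bool)) (i : 'I_K) : R :=
  \sum_(p <- h | p.1 == i) (p.2 : nat)%:R.

Definition ucb (R : realType) (K T : nat) (h : seq ('I_K * bool)) (i : 'I_K) : \bar R :=
  if npulls h i == 0%N then +oo%E
  else ((rsum R h i / (npulls h i)%:R)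
        + Num.sqrt (2 * ln (T%:R : R) / (npulls h i)%:R))%:E.

Definition ucb_max (R : realType) (K T : nat) (h : seq ('I_K * bool)) : {set 'I_K} :=
  [set i | [forall j, (ucb R T h j <= ucb R T h i)%E]].

(* History after t rounds of UCB, with tie-breaking rule tb (a fixed deterministic
   selection from the set of maximizers) and reward table X (X a t = reward arm a
   would give in round t). *)
Fixpoint ucb_hist (R : realType) (K T : nat) (tb : {set 'I_K} -> 'I_K)
    (X : 'I_K -> nat -> bool) (t : nat) : seq ('I_K * bool) :=
  match t with
  | 0 => [::]
  | t'.+1 => let h := ucb_hist R T tb X t' in
             let a := tb (ucb_max R T h) in rcons h (a, X a t')
  end.

(* Arm pulled by UCB in round t (rounds numbered 0 .. T-1). *)
Definition ucb_arm (R : realType) (K T : nat) (tb : {set 'I_K} -> 'I_K)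
    (X : 'I_K -> nat -> bool) (t : nat) : 'I_K :=
  tb (ucb_max R T (ucb_hist R T tb X t)).

(* Sample space: independent Bernoulli reward for every (arm, round). *)
Definition omega (K T : nat) := {ffun 'I_K * 'I_T -> bool}.

Definition rew (K T : nat) (w : omega K T) (a : 'I_K) (t : nat) : bool :=
  match (insub t : option 'I_T) with Some t' => w (a, t') | None => false end.

Definition prob (R : realType) (K T : nat) (mu : 'I_K -> R) (w : omega K T) : R :=
  \prod_(p : 'I_K * 'I_T) (if w p then mu p.1 else 1 - mu p.1).

Definition exp_mean (R : realType) (K T : nat) (mu : 'I_K -> R)
    (tb : {set 'I_K} -> 'I_K) (t : nat) : R :=
  \sum_(w : omega K T) prob mu w * mu (ucb_arm R T tb (@rew K T w) t).

Definition mu_star (R : realType) (K : nat) (mu : 'I_K -> R) : R :=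
  \big[Num.max/0]_(i < K) mu i.

Definition nash_regret (R : realType) (K : nat) (mu : 'I_K -> R) (T : nat)
    (tb : {set 'I_K} -> 'I_K) : R :=
  mu_star mu - powR (\prod_(t < T) exp_mean T mu tb t) (T%:R)^-1.

(* Main.v *)
Require Import Defs.
From HB Require Import structures.
From mathcomp Require Import all_boot all_order all_algebra.
From mathcomp Require Import all_classical all_reals all_analysis.
From mathcomp Require Import zify ring lra.
Import Order.TTheory GRing.Theory Num.Theory.
Local Open Scope ring_scope.
Set Implicit Arguments. Unset Strict Implicit.

Definition wg (T : nat) : omega 2 T := [ffun p => p.1 != ord0].

Lemma size_hist (R : realType) K T tb X t : size (@ucb_hist R K T tb X t) = t.
Proof. by elim: t => //= t IH; rewrite size_rcons IH. Qed.

Lemma npulls_rcons K (h : seq ('I_K * bool)) p i :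
  npulls (rcons h p) i = (npulls h i + (p.1 == i))%N.
Proof. by rewrite /npulls -cats1 count_cat /= addn0. Qed.

Lemma npulls01 (h : seq ('I_2 * bool)) : (npulls h ord0 + npulls h (ord_max : 'I_2))%N = size h.
Proof.
elim: h => //= p h IH; rewrite /npulls /= -/(npulls h ord0) -/(npulls h (ord_max : 'I_2)).
case: p => [[[|[|//]] ?] b] /=; rewrite -IH /=; lia.
Qed.

Definition good (h : seq ('I_2 * bool)) := all (fun p => p.2 == (p.1 != ord0)) h.

Lemma good_hist (R : realType) T tb t : (t <= T)%N ->
  good (@ucb_hist R 2 T tb (@rew 2 T (wg T)) t).
Proof.
elim: t => //= t IH Ht; rewrite /good all_rcons -/(good _) IH ?andbT; last lia.
rewrite /= /rew insubT /= ffunE //.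
Qed.

Lemma rsum_good (R : realType) (h : seq ('I_2 * bool)) i : good h ->
  rsum R h i = (i != ord0)%:R * (npulls h i)%:R.
Proof.
rewrite /rsum /npulls; elim: h => [|p h IH] /=; first by rewrite big_nil mulr0.
move=> /andP[/eqP hp hh]; rewrite big_cons IH //.
case: eqP => [<-|_]; last by rewrite add0n.
by rewrite hp; case: (p.1 != ord0); rewrite /= ?mul1r ?mul0r ?natrD ?add0r ?addr0.
Qed.

Lemma sum_prob (R : realType) K T (mu : 'I_K -> R) :
  \sum_(w : omega K T) prob mu w = 1.
Proof.
rewrite /prob.
have := (bigA_distr_bigA (fun (p : ('I_K * 'I_T)%type) (b : bool) => if b then mu p.1 else 1 - mu p.1)).
move=> <-; apply: big1 => p _.
rewrite big_bool /=.
by rewrite addrC subrK.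
Qed.

Lemma prob_ge0 (R : realType) K T (mu : 'I_K -> R) (w : omega K T) :
  (forall i, 0 <= mu i <= 1) -> 0 <= prob mu w.
Proof.
move=> hmu; apply: prodr_ge0 => p _; have /andP[h0 h1] := hmu p.1.
by case: (w p); lra.
Qed.

Lemma prod_ge_sub (R : realType) (I : Type) (s : seq I) (f : I -> R) :
  (forall i, 0 <= f i <= 1) -> 1 - \sum_(i <- s) (1 - f i) <= \prod_(i <- s) f i.
Proof.
move=> hf; elim: s => [|i s IH]; first by rewrite !big_nil; lra.
rewrite !big_cons.
have hS : 0 <= \sum_(j <- s) (1 - f j).
  by apply: sumr_ge0 => j _; have := hf j; lra.
have /andP[h0 h1] := hf i.
have : f i * (1 - \sum_(j <- s) (1 - f j)) <= f i * \prod_(j <- s) f j.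
  by apply: ler_wpM2l.
nra.
Qed.

Definition muf (R : realType) (m : R) : 'I_2 -> R := fun i => if i == ord0 then m else 1.

Lemma muf01 (R : realType) (m : R) : 0 <= m <= 1 -> forall i, 0 <= muf m i <= 1.
Proof. by move=> hm i; rewrite /muf; case: (i == ord0) => //; rewrite ler01 lexx. Qed.

Lemma prob_wg (R : realType) T (m : R) : 0 <= m <= 1 ->
  1 - T%:R * m <= prob (muf m) (wg T).
Proof.
move=> hm; rewrite /prob.
set f := (fun p : ('I_2 * 'I_T)%type => if wg T p then muf m p.1 else 1 - muf m p.1).
have hf : forall p, 0 <= f p <= 1.
  move=> p; rewrite /f; have /andP[a b] := muf01 hm p.1; case: (wg T p); lra.
apply: le_trans (prod_ge_sub _ hf).
rewrite (eq_bigr (fun p => 1 - f (p.1, p.2))); last by case.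
rewrite -(pair_big predT predT (fun i j => 1 - f (i, j))) /=.
rewrite big_ord_recl big_ord1 /f /muf /=.
rewrite /wg.
under eq_bigr do rewrite ffunE /= opprB addrC subrK.
under [X in _ - (_ + X)]eq_bigr do rewrite ffunE /= subrr.
rewrite big1_eq addr0 sumr_const card_ord mulr_natl lexx.
by [].
Qed.

Lemma em_ge0 (R : realType) T (m : R) tb t : 0 <= m <= 1 ->
  0 <= exp_mean T (muf m) tb t.
Proof.
move=> hm; apply: sumr_ge0 => w _; apply: mulr_ge0; first exact: prob_ge0 (muf01 hm).
by have /andP[] := muf01 hm (ucb_arm R T tb (rew w) t).
Qed.

Lemma em_le1 (R : realType) T (m : R) tb t : 0 <= m <= 1 ->
  exp_mean T (muf m) tb t <= 1.
Proof.
move=> hm; rewrite -(sum_prob T (muf m)); apply: ler_sum => w _.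
have hp := prob_ge0 w (muf01 hm).
have /andP[_ h1] := muf01 hm (ucb_arm R T tb (rew w) t).
by rewrite -{2}(mulr1 (prob _ _)); apply: ler_wpM2l.
Qed.

Lemma em_le (R : realType) T (m : R) tb t : 0 <= m <= 1 ->
  exp_mean T (muf m) tb t <= muf m (ucb_arm R T tb (@rew 2 T (wg T)) t) + T%:R * m.
Proof.
move=> hm; rewrite /exp_mean (bigD1 (wg T)) //=.
have hs := sum_prob T (muf m); rewrite (bigD1 (wg T)) //= in hs.
have hw := prob_wg T hm.
have hp0 := prob_ge0 (wg T) (muf01 hm).
have /andP[a1 a2] := muf01 hm (ucb_arm R T tb (rew (wg T)) t).
have : \sum_(w | w != wg T) prob (muf m) w * muf m (ucb_arm R T tb (rew w) t)
   <= \sum_(w | w != wg T) prob (muf m) w.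
  apply: ler_sum => w _; have hp := prob_ge0 w (muf01 hm).
  have /andP[_ h1] := muf01 hm (ucb_arm R T tb (rew w) t).
  by rewrite -{2}(mulr1 (prob _ _)); apply: ler_wpM2l.
have hS : 0 <= \sum_(w | w != wg T) prob (muf m) w.
  by apply: sumr_ge0 => w _; exact: prob_ge0 (muf01 hm).
have : prob (muf m) (wg T) * muf m (ucb_arm R T tb (rew (wg T)) t) <= muf m (ucb_arm R T tb (rew (wg T)) t).
  rewrite -{2}(mul1r (muf m _)); apply: ler_wpM2r => //; lra.
lra.
Qed.

Lemma ord2_cases (i : 'I_2) : i = ord0 \/ i = ord_max.
Proof. by case: i => [[|[|//]] hi]; [left|right]; apply/val_inj. Qed.

Lemma sqrt_ineq (R : realType) (L a b : R) : 0 < a -> 0 < b -> a < L -> 12 * L <= b ->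
  1 + Num.sqrt (2 * L / b) < Num.sqrt (2 * L / a).
Proof.
move=> a0 b0 aL bL.
have L0 : 0 < L by lra.
have hy0 : 0 <= 2 * L / b by apply: divr_ge0; lra.
have hz0 : 0 <= 2 * L / a by apply: divr_ge0; lra.
have hy : 2 * L / b <= 1 / 6.
  rewrite ler_pdivrMr //; lra.
have hz : 2 < 2 * L / a by rewrite ltr_pdivlMr //; lra.
have := sqr_sqrtr hy0; have := sqr_sqrtr hz0.
have := sqrtr_ge0 (2 * L / b); have := sqrtr_ge0 (2 * L / a).
set y := Num.sqrt (2 * L / b); set z := Num.sqrt (2 * L / a).
move=> z0 y0 ez ey.
have h1 : 2 * y <= 5 / 6 by nra.
nra.
Qed.

Lemma ucb_pick (R : realType) (T : nat) (tb : {set 'I_2} -> 'I_2)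
  (htb : forall A : {set 'I_2}, A != finset.set0 -> tb A \in A)
  (h : seq ('I_2 * bool)) :
  good h -> (0 < npulls h ord_max)%N ->
  (npulls h ord0)%:R < ln (T%:R : R) ->
  12 * ln (T%:R : R) <= (npulls h ord_max)%:R ->
  tb (ucb_max R T h) = ord0.
Proof.
move=> hg n1 n0L n1L.
have hlt : (ucb R T h ord_max < ucb R T h ord0)%E.
  rewrite /ucb gtn_eqF // rsum_good // /=.
  rewrite mul1r divff ?pnatr_eq0 -?lt0n //.
  case: ifP => [_|/negbT n0]; first exact: ltry.
  rewrite rsum_good // eqxx mul0r mul0r add0r lte_fin.
  apply: sqrt_ineq => //; rewrite ?ltr0n ?lt0n //.
  by rewrite -lt0n.
have -> : ucb_max R T h = [set ord0].
  apply/setP => i; rewrite !inE.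
  case: (ord2_cases i) => ->; rewrite ?eqxx.
    apply/forallP => j; case: (ord2_cases j) => ->; first exact: lexx.
    exact: ltW.
  apply/negbTE/negP => /forallP /(_ ord0); rewrite leNgt hlt //.
have : tb [set ord0] \in [set ord0 : 'I_2].
  by apply: htb; apply/set0Pn; exists ord0; rewrite inE.
by rewrite inE => /eqP.
Qed.

Section Run.
Variables (R : realType) (T : nat) (tb : {set 'I_2} -> 'I_2).
Hypothesis htb : forall A : {set 'I_2}, A != finset.set0 -> tb A \in A.

Let hg t := @ucb_hist R 2 T tb (@rew 2 T (wg T)) t.
Let armg t := @ucb_arm R 2 T tb (@rew 2 T (wg T)) t.
Let n0 t := npulls (hg t) ord0.
Let L := ln (T%:R : R).

Lemma n0S t : n0 t.+1 = (n0 t + (armg t == ord0))%N.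
Proof. by rewrite /n0 /hg /= npulls_rcons. Qed.

Lemma n0_mono t t' : (t <= t')%N -> (n0 t <= n0 t')%N.
Proof.
move=> /subnKC <-; elim: (t' - t)%N => [|j IH]; first by rewrite addn0.
by rewrite addnS n0S; apply: leq_trans IH _; apply: leq_addr.
Qed.

Lemma arm0 t : (n0 T)%:R < L -> (t < T)%N -> 13 * L <= t%:R -> armg t = ord0.
Proof.
move=> kL tT tL.
have hle : (n0 t <= n0 T)%N by apply: n0_mono; apply: ltnW.
have hn0 : (n0 t)%:R < L by apply: le_lt_trans kL; rewrite ler_nat.
have hsum := npulls01 (hg t); rewrite size_hist in hsum.
have hs : (n0 t)%:R + (npulls (hg t) ord_max)%:R = t%:R :> R.
  by rewrite -natrD hsum.
have k0 : 0 <= (n0 t)%:R :> R by [].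
have n1L : 12 * L <= (npulls (hg t) ord_max)%:R by lra.
apply: (ucb_pick htb) => //.
- by apply: good_hist; apply: ltnW.
- by rewrite -(ltr0n R); lra.
Qed.

Lemma count_run s j : (forall t, (s <= t < s + j)%N -> armg t = ord0) ->
  (j <= n0 (s + j))%N.
Proof.
elim: j => [|j IH] H //.
rewrite addnS n0S H; last by apply/andP; split; [apply: leq_addr| rewrite addnS].
rewrite eqxx addn1 ltnS IH // => t /andP[h1 h2]; apply: H; rewrite h1 /=.
by rewrite addnS ltnS ltnW.
Qed.

Lemma ln_lb (x : R) : 0 < x -> 1 - x^-1 <= ln x.
Proof.
move=> x0; have := expR_ge1Dx (- ln x); rewrite expRN lnK ?posrE //; lra.
Qed.

Lemma k_ge : 25 * L < T%:R -> L <= (n0 T)%:R.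
Proof.
move=> hT; rewrite leNgt; apply/negP => kL.
have L0 : 0 < L by apply: le_lt_trans kL.
have T2 : 1 < (T%:R : R).
  rewrite ltNge; apply/negP => T1; have := ln_le0 T1; rewrite -/L; lra.
have Lh : 1/2 <= L.
  have := ln_lb (lt_trans ltr01 T2); rewrite -/L.
  have : T%:R^-1 <= (2 : R)^-1.
    rewrite lef_pV2 ?posrE //; last lra.
    have T2n : (2 <= T)%N by rewrite -(ltr_nat R).
    by rewrite (ler_nat R 2 T).
  lra.
set s := (Num.truncn (13 * L)).+1.
have hs1 : 13 * L < s%:R by apply: truncnS_gt.
have hs2 : s%:R <= 13 * L + 1.
  have := truncn_itv (_ : 0 <= 13 * L); rewrite /s -natr1.
  move=> /(_ ltac:(lra)) /andP[a _]; lra.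
have sT : (s <= T)%N by rewrite -(ler_nat R); lra.
have hj : (T - s <= n0 T)%N.
  have := @count_run s (T - s)%N; rewrite subnKC //; apply.
  move=> t /andP[h1 h2]; apply: arm0 => //.
  by apply: le_trans (ltW hs1) _; rewrite ler_nat.
have : ((T - s)%N%:R : R) <= (n0 T)%:R by rewrite ler_nat.
rewrite natrB //; lra.
Qed.

End Run.

Lemma a_le (R : realType) (T : nat) :
  (T.+1)%:R * (2 * expR 1 : R) ^- T <= expR (- (T%:R * 1)).
Proof.
rewrite expRN expRM_natl exprMn invfM mulrA.
rewrite -[X in _ <= X]mul1r; apply: ler_wpM2r.
  by rewrite invr_ge0 exprn_ge0 // expR_ge0.
have h2 : (T.+1%:R : R) <= 2 ^+ T by rewrite -natrX ler_nat ltn_expl.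
have h0 : (0 : R) < 2 ^+ T by rewrite exprn_gt0.
by rewrite mulrC -ler_pdivlMl // mulr1 invrK.
Qed.

Unset Implicit Arguments.
Theorem mainTheorem19 (R : realType) (T : nat) (tb : {set 'I_2} -> 'I_2)
  (htb : forall A : {set 'I_2}, A != finset.set0 -> tb A \in A)
  (hT : 25 * ln (T%:R : R) < T%:R) :
  let mu : 'I_2 -> R := fun i => if i == ord0 then (2 * expR 1) ^- T else 1 in
  1 - (T%:R)^-1 <= nash_regret mu T tb.
Proof.
change (1 - (T%:R : R)^-1 <= nash_regret (muf ((2 * expR 1 : R) ^- T)) T tb).
set m : R := (2 * expR 1) ^- T.
have e1 : (1 : R) <= 2 * expR 1.
  have := expR_ge1Dx (1 : R); lra.
have hm : 0 <= m <= 1.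
  apply/andP; split; first by rewrite invr_ge0 exprn_ge0 //; lra.
  have h1 := exprn_ege1 T e1.
  rewrite /m invr_le1 // ?unitfE.
  by apply/negP => /eqP h; move: h1; rewrite h; lra.
have T1 : (1 <= T)%N.
  case: T hT {m hm} => // hT; exfalso; move: hT; rewrite ln0 //; lra.
have Tpos : (0 : R) < T%:R by rewrite ltr0n.
set L := ln (T%:R : R).
have kL := k_ge htb hT.
set k := npulls (ucb_hist R T tb (rew (T:=T) (wg T)) T) ord0 in kL.
set a := T.+1%:R * m.
have a0 : 0 <= a by apply: mulr_ge0 => //; case/andP: hm.
have hP : forall t, (t <= T)%N ->
  \prod_(i < t) exp_mean T (muf m) tb i
    <= a ^+ npulls (ucb_hist R T tb (rew (T:=T) (wg T)) t) ord0.
  elim=> [|t IH] ht; first by rewrite big_ord0.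
  rewrite big_ord_recr n0S.
  set Q := \big[_/_]_(i < t) _.
  have -> : Q = \prod_(i < t) exp_mean T (muf m) tb i.
    by rewrite /Q; apply: eq_bigr.
  change (\prod_(i < t) exp_mean T (muf m) tb i * exp_mean T (muf m) tb t <=
    a ^+ (npulls (ucb_hist R T tb (rew (T:=T) (wg T)) t) ord0 +
      (ucb_arm R T tb (rew (T:=T) (wg T)) t == ord0))).
  have IH' := IH (ltnW ht).
  set Pt := \prod_(i < t) exp_mean T (muf m) tb i in IH' *.
  have p0 : 0 <= Pt.
    by apply: prodr_ge0 => i _; apply: em_ge0.
  have e0 : 0 <= exp_mean T (muf m) tb t by apply: em_ge0.
  have e1' : exp_mean T (muf m) tb t <= 1 by apply: em_le1.
  have : exp_mean T (muf m) tb t <= muf m (ucb_arm R T tb (rew (T:=T) (wg T)) t) + T%:R * m.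
    by apply: em_le.
  set E := exp_mean T (muf m) tb t in e0 e1' *.
  case: eqP => [->|_] hE.
    rewrite addn1 exprS mulrC; apply: ler_pM => //.
    have -> : a = muf m ord0 + T%:R * m.
      by rewrite /muf eqxx /a -natr1 mulrDl mul1r addrC.
    exact: hE.
  rewrite (_ : nat_of_bool false = 0%N) // addn0 -[X in _ <= X]mulr1.
  by apply: ler_pM.
have P1 := hP T (leqnn T).
set P := \prod_(i < T) _ in P1.
have P0 : 0 <= P by apply: prodr_ge0 => i _; apply: em_ge0.
have hPe : P <= expR (- (T%:R * L)).
  apply: (le_trans P1); apply: (le_trans (y := expR (- (T%:R * 1)) ^+ k)).
    by apply: lerXn2r => //; rewrite ?nnegrE ?expR_ge0 //; exact: a_le.
  rewrite -expRM_natr ler_expR -mulNr -mulrA mul1r mulNr lerN2.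
  by apply: ler_wpM2l.
have hmu : 1 <= mu_star (muf m).
  rewrite /mu_star.
  apply: le_trans (le_bigmax _ _ (ord_max : 'I_2)).
  by rewrite /muf.
rewrite /nash_regret.
have : powR P T%:R^-1 <= T%:R^-1.
  apply: (le_trans (ge0_ler_powR _ _ _ hPe)) => //; rewrite ?invr_ge0 ?nnegrE ?expR_ge0 //.
  rewrite -expRM mulNr mulrAC divff ?mul1r; last by rewrite pnatr_eq0 -lt0n.
  by rewrite expRN lnK // posrE.
by move=> hp; apply: lerB.
Qed.
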